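(* Let $\gamma$ be a gauge on $\mathbb{R}^d$ with skewness $\sigma$, let $(D,w)$ and $(C,v)$ be finite positively weighted sets with $\sigma v_C<w_D$, and let $x$ be a Fermat–Weber point of $(D,w)+(C,v)$. Then there exist $e\in\mathbb{R}^d$ and $w_e\in(0,w_D/\sigma)$ such that $x$ is a Fermat–Weber point of $(D,w)+(e,w_e)$.
   Context: A gauge $\gamma$ on $\mathbb{R}^d$ is the Minkowski functional of a convex compact set $B_\gamma$ with the origin in its interior (not necessarily symmetric); its skewness is $\sigma=\sup_{x\ne0}\gamma(x)/\gamma(-x)$. For a weighted set, $w_D=\sum_{d\in D}w_d$. $(D,w)+(C,v)$ denotes $D\cup C$ with weight $w_x+v_x$ at $x$ (zero weight outside the respective set). A Fermat–Weber point of a finite positively weighted set $(S,u)$ is a minimizer of $x\mapsto\sum_{s\in S}u_s\gamma(x-s)$. *)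

(* Defs.v *)
From mathcomp Require Import all_boot all_order all_algebra.
From mathcomp Require Import all_classical all_reals all_analysis.
Set Implicit Arguments. Unset Strict Implicit. Unset Printing Implicit Defensive.
Import Order.TTheory GRing.Theory Num.Theory.
Import numFieldNormedType.Exports.
Local Open Scope classical_set_scope.
Local Open Scope ring_scope.

Definition gauge_body {R : realType} {d : nat} (B : set 'rV[R]_d) : Prop :=
  [/\ (forall x y (t : R), 0 <= t <= 1 -> B x -> B y -> B (t *: x + (1 - t) *: y)),
      compact B &
      nbhs (0 : 'rV[R]_d) B].

Definition gauge_of {R : realType} {d : nat} (B : set 'rV[R]_d) (x : 'rV[R]_d) : R :=
  inf [set t : R | 0 < t /\ B (t^-1 *: x)].

Definition skewness {R : realType} {d : nat} (gamma : 'rV[R]_d -> R) : R :=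
  sup [set gamma x / gamma (- x) | x in [set x : 'rV[R]_d | x != 0]].

Definition pos_wset {R : realType} {d : nat} (S : set 'rV[R]_d) (u : 'rV[R]_d -> R) : Prop :=
  finite_set S /\ (forall s, S s -> 0 < u s).

Definition wtotal {R : realType} {d : nat} (S : set 'rV[R]_d) (u : 'rV[R]_d -> R) : R :=
  (\sum_(s \in S) u s)%R.

Definition wsum_set {R : realType} {d : nat} (D C : set 'rV[R]_d) : set 'rV[R]_d := D `|` C.
Definition wsum_weight {R : realType} {d : nat} (D : set 'rV[R]_d) (w : 'rV[R]_d -> R)
  (C : set 'rV[R]_d) (v : 'rV[R]_d -> R) (x : 'rV[R]_d) : R :=
  (if `[< D x >] then w x else 0) + (if `[< C x >] then v x else 0).

Definition fw_obj {R : realType} {d : nat} (gamma : 'rV[R]_d -> R)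
  (S : set 'rV[R]_d) (u : 'rV[R]_d -> R) (x : 'rV[R]_d) : R :=
  (\sum_(s \in S) u s * gamma (x - s))%R.

Definition is_FW_point {R : realType} {d : nat} (gamma : 'rV[R]_d -> R)
  (S : set 'rV[R]_d) (u : 'rV[R]_d -> R) (x : 'rV[R]_d) : Prop :=
  forall y, fw_obj gamma S u x <= fw_obj gamma S u y.

(* Main.v *)
Require Import Defs.
From mathcomp Require Import all_boot all_order all_algebra.
From mathcomp Require Import all_classical all_reals all_analysis.
From mathcomp Require Import lra ring.
Set Implicit Arguments.
Import Order.TTheory GRing.Theory Num.Theory.
Import numFieldNormedType.Exports.
Local Open Scope classical_set_scope.
Local Open Scope ring_scope.

Lemma gb_ball (R : realType) (d : nat) (B : set 'rV[R]_d) :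
  gauge_body B -> exists r : R, 0 < r /\ forall y, `|y| < r -> B y.
Proof.
case=> _ _ /nbhs_ballP [r r0 rB]; exists r; split => // y yr; apply: rB.
by rewrite -ball_normE /= sub0r normrN.
Qed.

Lemma gb_bound (R : realType) (d : nat) (B : set 'rV[R]_d) :
  gauge_body B -> exists M : R, 0 < M /\ forall y, B y -> `|y| <= M.
Proof.
case=> _ /compact_bounded [M [Mr HM]] _.
exists (Num.max M 0 + 1); split; first by rewrite ltr_pwDr // le_max lexx orbT.
apply: HM; rewrite ltr_pwDr // le_max lexx //.
Qed.
Lemma gset_ne (R : realType) (d : nat) (B : set 'rV[R]_d) (u : 'rV[R]_d) :
  gauge_body B -> exists t : R, 0 < t /\ B (t^-1 *: u).
Proof.
move=> /gb_ball [r [r0 rB]].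
have t0 : 0 < 2 * (`|u| + 1) / r by rewrite divr_gt0 // mulr_gt0 // ltr_wpDl.
exists (2 * (`|u| + 1) / r); split => //; apply: rB.
rewrite normrZ ger0_norm ?invr_ge0 ?ltW // invf_div mulrAC ltr_pdivrMr; last first.
  by rewrite mulr_gt0 // ltr_wpDl.
rewrite ltr_pM2l //; have := normr_ge0 u; lra.
Qed.

Lemma gauge_le (R : realType) (d : nat) (B : set 'rV[R]_d) (u : 'rV[R]_d) (t : R) :
  0 < t -> B (t^-1 *: u) -> gauge_of B u <= t.
Proof.
move=> t0 Bt; apply: ge_inf => //; exists 0 => s [s0 _]; exact: ltW.
Qed.

Lemma gauge_ge (R : realType) (d : nat) (B : set 'rV[R]_d) (u : 'rV[R]_d) (a : R) :
  gauge_body B -> (forall t, 0 < t -> B (t^-1 *: u) -> a <= t) -> a <= gauge_of B u.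
Proof.
move=> gB H; apply: lb_le_inf.
  by have [t [t0 Bt]] := @gset_ne _ _ _ u gB; exists t.
by move=> s [s0 Bs]; apply: H.
Qed.

Lemma gauge_ge0 (R : realType) (d : nat) (B : set 'rV[R]_d) (u : 'rV[R]_d) :
  gauge_body B -> 0 <= gauge_of B u.
Proof. by move=> gB; apply: gauge_ge => // t t0 _; apply: ltW. Qed.

Lemma gauge_tri (R : realType) (d : nat) (B : set 'rV[R]_d) (u v : 'rV[R]_d) :
  gauge_body B -> gauge_of B (u + v) <= gauge_of B u + gauge_of B v.
Proof.
move=> gB; have [cvx _ _] := gB.
have hl : forall z, has_inf [set t : R | 0 < t /\ B (t^-1 *: z)].
  move=> z; split; first by have [t [t0 Bt]] := @gset_ne _ _ _ z gB; exists t.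
  by exists 0 => s [s0 _]; exact: ltW.
apply/ler_addgt0Pr => e e0.
have e20 : 0 < e / 2 by rewrite divr_gt0.
have [a [a0 Ba] ha] := inf_adherent e20 (hl u).
have [b [b0 Bb] hb] := inf_adherent e20 (hl v).
apply: (@le_trans _ _ (a + b)); last first.
  rewrite /gauge_of; lra.
apply: gauge_le; first by rewrite addr_gt0.
have ab0 : 0 < a + b by rewrite addr_gt0.
have t01 : 0 <= a / (a + b) <= 1.
  rewrite divr_ge0 ?ltW //= ltr_pdivrMr // mul1r; lra.
have := cvx _ _ _ t01 Ba Bb.
congr B; rewrite !scalerA scalerDr; congr (_ *: _ + _ *: _).
  by field; rewrite !gt_eqF.
rewrite -[X in X - _](divff (lt0r_neq0 ab0)) -mulrBl addrAC subrr add0r.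
by rewrite mulrAC divff ?gt_eqF // mul1r.
Qed.

Lemma gauge_ub (R : realType) (d : nat) (B : set 'rV[R]_d) :
  gauge_body B -> exists r : R, 0 < r /\
    forall u, u != 0 -> gauge_of B u <= 2 * `|u| / r.
Proof.
move=> gB; have [r [r0 rB]] := gb_ball gB; exists r; split => // u u0.
have n0 : 0 < `|u| by rewrite normr_gt0.
apply: gauge_le; first by rewrite divr_gt0 // mulr_gt0.
apply: rB; rewrite normrZ ger0_norm ?invr_ge0 ?divr_ge0 ?mulr_ge0 ?ltW //.
rewrite invf_div mulrAC ltr_pdivrMr ?mulr_gt0 // ltr_pM2l //; lra.
Qed.

Lemma gauge_lb (R : realType) (d : nat) (B : set 'rV[R]_d) :
  gauge_body B -> exists M : R, 0 < M /\
    forall u, `|u| / M <= gauge_of B u.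
Proof.
move=> gB; have [M [M0 HM]] := gb_bound gB; exists M; split => // u.
apply: gauge_ge => // t t0 Bt; have := HM _ Bt.
rewrite normrZ ger0_norm ?invr_ge0 ?(ltW t0) // ler_pdivrMr //.
by rewrite mulrC ler_pdivrMr // mulrC.
Qed.

Lemma skew_gt0 (R : realType) (d : nat) (B : set 'rV[R]_d) :
  (0 < d)%N -> gauge_body B -> 0 < skewness (gauge_of B).
Proof.
move=> d0 gB.
have [r [r0 Hr]] := gauge_ub gB; have [M [M0 HM]] := gauge_lb gB.
set S := [set gauge_of B x / gauge_of B (- x) | x in [set x : 'rV[R]_d | x != 0]].
have gpos : forall u, u != 0 -> 0 < gauge_of B u.
  move=> u u0; apply: (lt_le_trans _ (HM u)); rewrite divr_gt0 // normr_gt0 //.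
have hub : ubound S (2 * M / r).
  move=> z [u /= u0 <-].
  have nu0 : - u != 0 by rewrite oppr_eq0.
  rewrite ler_pdivrMr ?gpos //; apply: (le_trans (Hr u u0)).
  apply: (le_trans _ (ler_wpM2l _ (HM (- u)))); last first.
    by rewrite divr_ge0 ?mulr_ge0 ?ltW.
  rewrite normrN le_eqVlt; apply/orP; left; apply/eqP.
  by field; rewrite !lt0r_neq0.
pose u0 : 'rV[R]_d := const_mx 1.
have u00 : u0 != 0.
  apply/eqP => /matrixP /(_ 0 (Ordinal d0)); rewrite !mxE => /eqP.
  by rewrite oner_eq0.
have Su : S (gauge_of B u0 / gauge_of B (- u0)) by exists u0.
have hS : has_ubound S by exists (2 * M / r).
apply: (lt_le_trans _ (ub_le_sup hS Su)).
by rewrite divr_gt0 ?gpos // oppr_eq0.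
Qed.
Lemma fw_decomp (R : realType) (d : nat) (g : 'rV[R]_d -> R)
  (D : set 'rV[R]_d) (w : 'rV[R]_d -> R) (C : set 'rV[R]_d) (v : 'rV[R]_d -> R) y :
  finite_set D -> finite_set C ->
  fw_obj g (wsum_set D C) (wsum_weight D w C v) y = fw_obj g D w y + fw_obj g C v y.
Proof.
move=> Df Cf; rewrite /fw_obj /wsum_set /wsum_weight.
under eq_fsbigr => s _ do rewrite mulrDl.
rewrite fsbig_split; last by rewrite finite_setU.
congr (_ + _).
  transitivity (\sum_(s \in D) (if `[< D s >] then w s else 0) * g (y - s)).
    apply/esym/fsbig_widen; first by move=> ?; left.
    by move=> s [_ nDs] /=; rewrite asboolF // mul0r.
  by apply: eq_fsbigr => s; rewrite inE => Ds; rewrite asboolT.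
transitivity (\sum_(s \in C) (if `[< C s >] then v s else 0) * g (y - s)).
  apply/esym/fsbig_widen; first by move=> ?; right.
  by move=> s [_ nCs] /=; rewrite asboolF // mul0r.
by apply: eq_fsbigr => s; rewrite inE => Cs; rewrite asboolT.
Qed.

Lemma gauge0 (R : realType) (d : nat) (B : set 'rV[R]_d) :
  gauge_body B -> gauge_of B 0 = 0.
Proof.
move=> gB; apply/eqP; rewrite eq_le gauge_ge0 // andbT.
have [r [r0 rB]] := gb_ball gB.
apply/ler_addgt0Pr => e e0; rewrite add0r; apply: gauge_le => //.
by rewrite scaler0; apply: rB; rewrite normr0.
Qed.

Theorem mainTheorem18 (R : realType) (d : nat) (B : set 'rV[R]_d)
  (D : set 'rV[R]_d) (w : 'rV[R]_d -> R) (C : set 'rV[R]_d) (v : 'rV[R]_d -> R)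
  (x : 'rV[R]_d) :
  (0 < d)%N ->
  gauge_body B ->
  pos_wset D w -> pos_wset C v ->
  skewness (gauge_of B) * wtotal C v < wtotal D w ->
  is_FW_point (gauge_of B) (wsum_set D C) (wsum_weight D w C v) x ->
  exists (e : 'rV[R]_d) (we : R),
    0 < we /\ we < wtotal D w / skewness (gauge_of B) /\
    is_FW_point (gauge_of B) (wsum_set D [set e])
      (wsum_weight D w [set e] (fun _ => we)) x.
Proof.
move=> d0 gB [Df wpos] [Cf vpos] hsig hFW.
set g := gauge_of B in hFW *.
set sg := skewness g in hsig *.
have s0 : 0 < sg := skew_gt0 d0 gB.
have vC0 : 0 <= wtotal C v by apply: fsumr_ge0 => s Cs; apply: ltW; apply: vpos.
have vlt : wtotal C v < wtotal D w / sg by rewrite ltr_pdivlMr // mulrC.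
have key : forall y, fw_obj g D w x <= fw_obj g D w y + wtotal C v * g (y - x).
  move=> y; have := hFW y; rewrite !fw_decomp //.
  suff : fw_obj g C v y <= fw_obj g C v x + wtotal C v * g (y - x) by lra.
  rewrite /fw_obj /wtotal mulr_fsuml -fsbig_split //.
  rewrite !fsbig_finite // big_seq [X in _ <= X]big_seq; apply: ler_sum => s.
  rewrite in_fset_set // inE => Cs.
  rewrite /= -mulrDr; apply: ler_wpM2l; first exact: ltW (vpos s Cs).
  have -> : y - s = (y - x) + (x - s) by rewrite addrA subrK.
  by rewrite addrC; apply: gauge_tri.
exists x, ((wtotal C v + wtotal D w / sg) / 2); split; first by lra.
split; first by lra.
move=> y; rewrite !fw_decomp // ?finite_set1 // /fw_obj !fsbig_set1 subrr.
rewrite /g gauge0 // mulr0 addr0; apply: (le_trans (key y)).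
rewrite lerD2l; apply: ler_wpM2r; first exact: gauge_ge0.
lra.
Qed.
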